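(* There exists a residually finite monoid $M$ whose (right) action on its set of $\mathcal{L}$-classes is not residually finite.
   Context: A monoid is residually finite if distinct elements are separated by homomorphisms to finite monoids. $x\mathcal{L}y$ iff $Mx=My$; $M$ acts on $M/\mathcal{L}$ by $L_x\cdot m=L_{xm}$. A right action of $M$ on a set $X$ is residually finite if for any distinct $x,y\in X$ there exist an action of $M$ on a finite set $Y$ and an action homomorphism $f:X\to Y$ with $f(x)\neq f(y)$. *)

(* Defs.v *)
From Stdlib Require Import List.


Record Monoid := {
  mcar :> Type;
  mop : mcar -> mcar -> mcar;
  mone : mcar;
  mop_assoc : forall x y z, mop x (mop y z) = mop (mop x y) z;
  mop_1l : forall x, mop mone x = x;
  mop_1r : forall x, mop x mone = x
}.

Definition finite_type (T : Type) : Prop := exists l : list T, forall x, In x l.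

Definition monoid_hom (M N : Monoid) (f : M -> N) : Prop :=
  f (mone M) = mone N /\ forall x y, f (mop M x y) = mop N (f x) (f y).

Definition residually_finite (M : Monoid) : Prop :=
  forall x y : M, x <> y ->
    exists (N : Monoid) (f : M -> N),
      finite_type N /\ monoid_hom M N f /\ f x <> f y.

Definition is_right_action (M : Monoid) (X : Type) (act : X -> M -> X) : Prop :=
  (forall x, act x (mone M) = x) /\
  (forall x m n, act x (mop M m n) = act (act x m) n).

Definition action_residually_finite (M : Monoid) (X : Type) (act : X -> M -> X) : Prop :=
  forall x y : X, x <> y ->
    exists (Y : Type) (actY : Y -> M -> Y),
      finite_type Y /\ is_right_action M Y actY /\
      exists f : X -> Y,
        (forall (z : X) (m : M), f (act z m) = actY (f z) m) /\ f x <> f y.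

Definition Lrel (M : Monoid) (x y : M) : Prop :=
  forall z : M, (exists a, z = mop M a x) <-> (exists b, z = mop M b y).

Lemma Lrel_refl (M : Monoid) (x : M) : Lrel M x x.
Proof. intro z; tauto. Qed.

Lemma Lrel_trans (M : Monoid) (x y z : M) : Lrel M x y -> Lrel M y z -> Lrel M x z.
Proof. intros H1 H2 w; split; intro H; [apply H2, H1, H | apply H1, H2, H]. Qed.

Lemma Lrel_rcong (M : Monoid) (x y m : M) : Lrel M x y -> Lrel M (mop M x m) (mop M y m).
Proof.
  intros H z; split; intros [a Ha]; subst z.
  - destruct (proj1 (H (mop M a x)) (ex_intro _ a eq_refl)) as [b Hb].
    exists b. rewrite mop_assoc, Hb, <- mop_assoc; reflexivity.
  - destruct (proj2 (H (mop M a y)) (ex_intro _ a eq_refl)) as [b Hb].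
    exists b. rewrite mop_assoc, Hb, <- mop_assoc; reflexivity.
Qed.

Definition Lclass (M : Monoid) : Type :=
  { P : M -> Prop | exists x : M, forall y, P y <-> Lrel M x y }.

Definition Lact_pred (M : Monoid) (P : Lclass M) (m : M) : M -> Prop :=
  fun y => exists x, proj1_sig P x /\ Lrel M (mop M x m) y.

Lemma Lact_pred_class (M : Monoid) (P : Lclass M) (m : M) :
  exists x0 : M, forall y, Lact_pred M P m y <-> Lrel M x0 y.
Proof.
  destruct P as [P [x0 Hx0]]. exists (mop M x0 m). intro y; split.
  - intros [x [Px Hxy]]. simpl in Px. apply (Lrel_trans M _ (mop M x m)); auto.
    apply Lrel_rcong, Hx0, Px.
  - intro H. exists x0. split; [apply Hx0, Lrel_refl | exact H].
Qed.

(** The right action L_x . m = L_{xm} of M on M/L. *)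
Definition Lact (M : Monoid) (P : Lclass M) (m : M) : Lclass M :=
  exist _ (Lact_pred M P m) (Lact_pred_class M P m).

(* Main.v *)
Require Import Defs.
From Stdlib Require Import ZArith Lia Arith Factorial List Classical
  FunctionalExtensionality PropExtensionality ProofIrrelevance.

Lemma Lrel_sym (M : Monoid) (x y : M) : Lrel M x y -> Lrel M y x.
Proof. intros H z; split; intro; apply H; auto. Qed.

Lemma Lrel_units (M : Monoid) (a b u u' : M) :
  a = mop M u' b -> b = mop M u a -> Lrel M a b.
Proof.
  intros H1 H2 w; split; intros [c Hc]; subst w.
  - exists (mop M c u'). rewrite H1. apply mop_assoc.
  - exists (mop M c u). rewrite H2. apply mop_assoc.
Qed.

Lemma Lclass_eq (M : Monoid) (A B : Lclass M) :
  (forall y, proj1_sig A y <-> proj1_sig B y) -> A = B.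
Proof.
  destruct A as [P p], B as [Q q]; simpl; intro H.
  assert (P = Q) by (extensionality y; apply propositional_extensionality; auto).
  subst. f_equal. apply proof_irrelevance.
Qed.

Definition cls (M : Monoid) (a : M) : Lclass M :=
  exist _ (fun y => Lrel M a y) (ex_intro _ a (fun y => iff_refl _)).

Lemma cls_Lact (M : Monoid) (m : M) : Lact M (cls M (mone M)) m = cls M m.
Proof.
  apply Lclass_eq. simpl. intro y. unfold Lact_pred. simpl. split.
  - intros [x [H1 H2]]. apply (Lrel_trans M _ (mop M x m)); auto.
    apply Lrel_sym. pose proof (Lrel_rcong M x (mone M) m (Lrel_sym M _ _ H1)) as H3.
    rewrite mop_1l in H3. exact H3.
  - intro H. exists (mone M). split; [apply Lrel_refl|]. rewrite mop_1l; auto.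
Qed.

Lemma cls_L (M : Monoid) (a b : M) : Lrel M a b -> cls M a = cls M b.
Proof.
  intro H. apply Lclass_eq. simpl. intro y; split; intro H'.
  - apply (Lrel_trans M _ a); auto. apply Lrel_sym; auto.
  - apply (Lrel_trans M _ b); auto.
Qed.

Fixpoint pow (M : Monoid) (z : M) (n : nat) : M :=
  match n with O => mone M | S n => mop M (pow M z n) z end.

Lemma php {Y : Type} (l : list Y) : forall s : nat -> Y,
  (forall i, i <= length l -> In (s i) l) ->
  exists i j, i < j <= length l /\ s i = s j.
Proof.
  induction l as [|a l IH]; intros s Hs.
  - destruct (Hs 0 (le_n 0)).
  - simpl in Hs |- *. set (n := length l) in *.
    destruct (classic (exists i0, i0 <= n /\ s i0 = a)) as [[i0 [Hi0 Hsi0]]|Hno].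
    + destruct (classic (exists j, j <= S n /\ j <> i0 /\ s j = a))
        as [[j [Hj [Hji Hsj]]]|Hno2].
      * destruct (proj1 (Nat.lt_gt_cases i0 j) (not_eq_sym Hji)) as [Hlt|Hgt].
        -- exists i0, j. split; [lia| congruence].
        -- exists j, i0. split; [lia| congruence].
      * set (s' := fun i => if i <? i0 then s i else s (S i)).
        destruct (IH s') as [i [j [Hij Hsij]]].
        { intros i Hi. unfold s'. destruct (Nat.ltb_spec i i0).
          - destruct (Hs i ltac:(lia)) as [Heq|Hin]; [|exact Hin].
            exfalso; apply Hno2; exists i; repeat split; auto; lia.
          - destruct (Hs (S i) ltac:(lia)) as [Heq|Hin]; [|exact Hin].
            exfalso; apply Hno2; exists (S i); repeat split; auto; lia. }
        unfold s' in Hsij.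
        exists (if i <? i0 then i else S i), (if j <? i0 then j else S j).
        destruct (Nat.ltb_spec i i0), (Nat.ltb_spec j i0); split; auto; lia.
    + destruct (IH s) as [i [j [H1 H2]]].
      { intros i Hi. destruct (Hs i ltac:(lia)) as [Heq|Hin]; [|exact Hin].
        exfalso; apply Hno; exists i; split; auto. }
      exists i, j; split; [lia|auto].
Qed.

Lemma period {Y : Type} (s : nat -> Y) (g : Y -> Y) :
  (forall m, s (S m) = g (s m)) -> forall i j, s i = s j ->
  forall t, s (i + t) = s (j + t).
Proof.
  intros Hs i j H t. induction t.
  - rewrite !Nat.add_0_r; auto.
  - rewrite !Nat.add_succ_r, !Hs, IHt; reflexivity.
Qed.

Lemma period2 {Y : Type} (s : nat -> Y) (g : Y -> Y) :
  (forall m, s (S m) = g (s m)) -> forall i j, i <= j -> s i = s j ->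
  forall q t, s (i + t) = s (i + t + q * (j - i)).
Proof.
  intros Hs i j Hij H q. induction q; intro t.
  - rewrite Nat.mul_0_l, Nat.add_0_r; auto.
  - rewrite Nat.mul_succ_l. set (w := q * (j - i)).
    replace (i + t + (w + (j - i))) with (j + (t + w)) by lia.
    rewrite <- (period s g Hs i j H). rewrite Nat.add_assoc. apply IHq.
Qed.

Lemma le_fact n : n <= fact n.
Proof. induction n; simpl; [lia|]. pose proof (lt_O_fact n). nia. Qed.

Lemma div_fact p n : 1 <= p <= n -> Nat.divide p (fact n).
Proof.
  induction n; intros H; [lia|].
  destruct (Nat.eq_dec p (S n)) as [->|Hne].
  - exists (fact n). simpl fact. lia.
  - change (fact (S n)) with (S n * fact n). apply Nat.divide_mul_r. apply IHn; lia.
Qed.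

Open Scope Z_scope.

Fixpoint Phi (a : nat -> Z) (N : nat) : Z :=
  match N with O => a O | S N' => Z.of_nat (S N') * Phi a N' + a (S N') end.

Lemma Phi_ext a b N : (forall k, a k = b k) -> Phi a N = Phi b N.
Proof. intro H; induction N; cbn [Phi]; [apply H| rewrite IHN, H; reflexivity]. Qed.

Lemma Phi_lin a b c1 c2 N :
  Phi (fun k => c1 * a k + c2 * b k) N = c1 * Phi a N + c2 * Phi b N.
Proof. induction N; cbn [Phi]; [reflexivity| rewrite IHN; ring]. Qed.

Lemma Phi_up a N d : (forall k, (N < k)%nat -> a k = 0) -> 0 <= Phi a N ->
  0 <= Phi a (d + N).
Proof.
  intros H H0; induction d; cbn [Phi Nat.add]; auto.
  rewrite (H (S (d + N))) by lia. nia.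
Qed.

Lemma Phi_up' a N N' : (forall k, (N < k)%nat -> a k = 0) -> 0 <= Phi a N ->
  (N <= N')%nat -> 0 <= Phi a N'.
Proof.
  intros H H0 H1. replace N' with ((N' - N) + N)%nat by lia. apply Phi_up; auto.
Qed.

Definition inM (a : nat -> Z) : Prop :=
  exists N, (forall k, (N < k)%nat -> a k = 0) /\ 0 <= Phi a N.

Lemma inM_add a b : inM a -> inM b -> inM (fun k => a k + b k).
Proof.
  intros [N1 [S1 P1]] [N2 [S2 P2]]. exists (Nat.max N1 N2). split.
  - intros k Hk. rewrite S1, S2 by lia. reflexivity.
  - rewrite (Phi_ext _ (fun k => 1 * a k + 1 * b k)) by (intro; ring).
    rewrite Phi_lin.
    pose proof (Phi_up' a N1 (Nat.max N1 N2) S1 P1 ltac:(lia)).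
    pose proof (Phi_up' b N2 (Nat.max N1 N2) S2 P2 ltac:(lia)). lia.
Qed.

Lemma inM_zero : inM (fun _ => 0).
Proof. exists 0%nat; split; [auto | simpl; lia]. Qed.

Definition Mc := {a : nat -> Z | inM a}.
Definition Madd (x y : Mc) : Mc :=
  exist _ (fun k => proj1_sig x k + proj1_sig y k) (inM_add _ _ (proj2_sig x) (proj2_sig y)).
Definition Mzero : Mc := exist _ (fun _ => 0) inM_zero.

Lemma Meq (x y : Mc) : (forall k, proj1_sig x k = proj1_sig y k) -> x = y.
Proof.
  destruct x as [a pa], y as [b pb]; simpl; intro H.
  assert (a = b) by (extensionality k; auto). subst. f_equal. apply proof_irrelevance.
Qed.

Definition Mon : Monoid.
Proof.
  refine {| mcar := Mc; mop := Madd; mone := Mzero |};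
  intros; apply Meq; intro k; simpl; lia.
Defined.

Lemma Mop_val (a b : Mon) k : proj1_sig (mop Mon a b) k = proj1_sig a k + proj1_sig b k.
Proof. reflexivity. Qed.
Lemma Mone_val k : proj1_sig (mone Mon) k = 0.
Proof. reflexivity. Qed.

Lemma pow_val (z : Mon) m k : proj1_sig (pow Mon z m) k = Z.of_nat m * proj1_sig z k.
Proof.
  induction m; simpl pow.
  - rewrite Mone_val. simpl. reflexivity.
  - rewrite Mop_val, IHm, Nat2Z.inj_succ. ring.
Qed.

Definition en (n : nat) : nat -> Z := fun k => if Nat.eqb k n then 1 else 0.

Lemma Phi_en_lt n m : (m < n)%nat -> Phi (en n) m = 0.
Proof.
  induction m; intros H; cbn [Phi].
  - unfold en. destruct (Nat.eqb_spec 0 n); [lia|reflexivity].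
  - rewrite IHm by lia. unfold en. destruct (Nat.eqb_spec (S m) n); [lia|ring].
Qed.

Lemma Phi_en n : Phi (en n) n = 1.
Proof.
  destruct n; [reflexivity|]. cbn [Phi]. rewrite Phi_en_lt by lia.
  unfold en. rewrite Nat.eqb_refl. ring.
Qed.

Lemma en_supp n k : (n < k)%nat -> en n k = 0.
Proof. intro. unfold en. destruct (Nat.eqb_spec k n); [lia|reflexivity]. Qed.

Lemma inM_en n : inM (en n).
Proof. exists n; split; [apply en_supp | rewrite Phi_en; lia]. Qed.

Definition E (n : nat) : Mon := exist _ (en n) (inM_en n).

Lemma Phi_e0 N : Phi (en 0) N = Z.of_nat (fact N).
Proof.
  induction N; [reflexivity|]. cbn [Phi]. rewrite IHN, (en_supp 0 (S N)) by lia.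
  change (fact (S N)) with (S N * fact N)%nat. rewrite Nat2Z.inj_mul. ring.
Qed.

Lemma L_of_Phi (a b : Mon) N :
  (forall k, (N < k)%nat -> proj1_sig a k = 0) ->
  (forall k, (N < k)%nat -> proj1_sig b k = 0) ->
  Phi (proj1_sig a) N = Phi (proj1_sig b) N -> Lrel Mon a b.
Proof.
  intros Sa Sb HP.
  assert (Hu : inM (fun k => 1 * proj1_sig b k + (-1) * proj1_sig a k)).
  { exists N; split; [intros k Hk; rewrite Sa, Sb by lia; ring| rewrite Phi_lin; lia]. }
  assert (Hu' : inM (fun k => 1 * proj1_sig a k + (-1) * proj1_sig b k)).
  { exists N; split; [intros k Hk; rewrite Sa, Sb by lia; ring| rewrite Phi_lin; lia]. }
  apply (Lrel_units Mon a b (exist _ _ Hu : Mon) (exist _ _ Hu' : Mon));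
    apply Meq; intro k; rewrite Mop_val; cbn [proj1_sig]; ring.
Qed.

Definition Zc (p : positive) := {z : Z | z mod Z.pos p = z}.
Definition Zadd p (x y : Zc p) : Zc p :=
  exist _ ((proj1_sig x + proj1_sig y) mod Z.pos p) (Zmod_mod _ _).
Definition Zzero p : Zc p := exist _ 0 (Zmod_0_l _).

Lemma Zeq p (x y : Zc p) : proj1_sig x = proj1_sig y -> x = y.
Proof.
  destruct x as [a pa], y as [b pb]; simpl; intro; subst. f_equal. apply proof_irrelevance.
Qed.

Definition ZMon (p : positive) : Monoid.
Proof.
  refine {| mcar := Zc p; mop := Zadd p; mone := Zzero p |}; intros; apply Zeq; cbn [proj1_sig Zadd Zzero].
  - rewrite Z.add_mod_idemp_l, Z.add_mod_idemp_r by lia. f_equal. ring.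
  - destruct x as [x px]; cbn [proj1_sig Zzero]. rewrite Z.add_0_l. exact px.
  - destruct x as [x px]; cbn [proj1_sig Zzero]. rewrite Z.add_0_r. exact px.
Defined.

Lemma ZMon_finite p : finite_type (ZMon p).
Proof.
  exists (map (fun i => exist _ (Z.of_nat i mod Z.pos p) (Zmod_mod _ _) : Zc p)
            (seq 0 (Pos.to_nat p))).
  intros [z pz]. apply in_map_iff.
  pose proof (Z.mod_pos_bound z (Z.pos p) ltac:(lia)) as Hb. rewrite pz in Hb.
  exists (Z.to_nat z). split.
  - apply Zeq; simpl. rewrite Z2Nat.id by lia. exact pz.
  - apply in_seq. lia.
Qed.

Lemma M_rf : residually_finite Mon.
Proof.
  intros a b Hab.
  assert (Hk : exists k, proj1_sig a k <> proj1_sig b k).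
  { apply NNPP; intro Hn; apply Hab; apply Meq; intro k; apply NNPP; intro; apply Hn; eauto. }
  destruct Hk as [k Hk].
  set (p := Z.to_pos (Z.abs (proj1_sig a k - proj1_sig b k) + 1)).
  assert (Hp : Z.pos p = Z.abs (proj1_sig a k - proj1_sig b k) + 1)
    by (apply Z2Pos.id; lia).
  exists (ZMon p), (fun c : Mon => exist _ (proj1_sig c k mod Z.pos p) (Zmod_mod _ _) : Zc p).
  split; [apply ZMon_finite|]. split; [split|].
  - apply Zeq; simpl. reflexivity.
  - intros x y. apply Zeq; simpl. rewrite Z.add_mod by lia. reflexivity.
  - intro H. apply (f_equal (@proj1_sig _ _)) in H. cbn [proj1_sig] in H.
    rewrite Hp in H.
    set (m := Z.abs (proj1_sig a k - proj1_sig b k) + 1) in *.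
    pose proof (Z.div_mod (proj1_sig a k) m ltac:(lia)).
    pose proof (Z.div_mod (proj1_sig b k) m ltac:(lia)).
    set (A := proj1_sig a k) in *. set (B := proj1_sig b k) in *.
    assert (HD : A - B = m * (A / m - B / m)) by (rewrite Z.mul_sub_distr_l; lia).
    apply Hk. destruct (Z.eq_dec (A / m) (B / m)) as [E|E].
    + rewrite E, Z.sub_diag, Z.mul_0_r in HD. lia.
    + exfalso. assert (Hm : 0 < m) by lia.
      destruct (Z.lt_gt_cases (A / m) (B / m)) as [[Hl|Hl] _]; [exact E| |]; nia.
Qed.

Lemma not_L_e0 : ~ Lrel Mon (E 0) (mop Mon (E 0) (E 0)).
Proof.
  intro H. destruct (proj1 (H (E 0))) as [d Hd].
  { exists (mone Mon). symmetry. apply mop_1l. }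
  destruct (proj2_sig d) as [N [_ HN]].
  assert (Hdk : forall k, proj1_sig d k = (-1) * en 0 k + 0 * en 0 k).
  { intro k. apply (f_equal (fun c : Mon => proj1_sig c k)) in Hd.
    rewrite !Mop_val in Hd. cbn [proj1_sig E] in Hd. lia. }
  rewrite (Phi_ext _ _ N Hdk), Phi_lin, Phi_e0 in HN.
  pose proof (lt_O_fact N). lia.
Qed.

Close Scope Z_scope.

Theorem mainTheorem6 :
  exists M : Monoid,
    residually_finite M /\ ~ action_residually_finite M (Lclass M) (Lact M).
Proof.
  exists Mon. split; [apply M_rf|]. intro H.
  set (x := E 0).
  assert (Hne : cls Mon x <> cls Mon (mop Mon x x)).
  { intro Heq. apply (f_equal (@proj1_sig _ _)) in Heq. cbn [proj1_sig cls] in Heq.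
    apply not_L_e0. apply Lrel_sym.
    pose proof (equal_f Heq x) as Hx. cbv beta in Hx. exact (eq_rect (Lrel Mon x x) (fun P : Prop => P) (Lrel_refl Mon x) _ Hx). }
  destruct (H _ _ Hne) as [Y [actY [[l Hl] [[Ha1 Ha2] [f [Hf Hfne]]]]]].
  set (y0 := f (cls Mon (mone Mon))).
  assert (Hfc : forall m, f (cls Mon m) = actY y0 m).
  { intro m. rewrite <- cls_Lact. apply Hf. }
  set (n := length l). set (z := E n). set (K := fact n).
  set (s := fun i => actY y0 (pow Mon z i)).
  assert (Hs : forall i, s (S i) = actY (s i) z).
  { intro i. unfold s. simpl pow. apply Ha2. }
  destruct (php l s (fun i _ => Hl _)) as [i [j [Hij Hsij]]].
  fold n in Hij.
  assert (HK : s K = s (K + K)).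
  { destruct (div_fact (j - i) n ltac:(lia)) as [q Hq]. fold K in Hq.
    pose proof (le_fact n). fold K in H0.
    replace K with (i + (K - i)) at 1 by lia.
    replace (K + K) with (i + (K - i) + q * (j - i)) by lia.
    apply (period2 s (fun y => actY y z) Hs i j ltac:(lia) Hsij). }
  assert (Supp : forall (c : nat) k, n < k -> proj1_sig (pow Mon z c) k = 0%Z).
  { intros c k Hk. rewrite pow_val. cbn [proj1_sig z E]. rewrite en_supp by lia. lia. }
  assert (H1 : f (cls Mon x) = s K).
  { unfold s. rewrite <- Hfc. f_equal. apply cls_L. apply (L_of_Phi _ _ n).
    - intros k Hk. cbn [proj1_sig x E]. apply en_supp; lia.
    - apply Supp.
    - rewrite (Phi_ext (proj1_sig (pow Mon z K)) (fun k => Z.of_nat K * en n k + 0 * en n k)%Z)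
        by (intro k; rewrite pow_val; cbn [proj1_sig z E]; ring).
      rewrite Phi_lin, Phi_en. cbn [proj1_sig x E]. rewrite Phi_e0. unfold K. ring. }
  assert (H2 : f (cls Mon (mop Mon x x)) = s (K + K)).
  { unfold s. rewrite <- Hfc. f_equal. apply cls_L. apply (L_of_Phi _ _ n).
    - intros k Hk. rewrite Mop_val. cbn [proj1_sig x E]. rewrite en_supp by lia. lia.
    - apply Supp.
    - rewrite (Phi_ext (proj1_sig (pow Mon z (K + K))) (fun k => Z.of_nat (K + K) * en n k + 0 * en n k)%Z)
        by (intro k; rewrite pow_val; cbn [proj1_sig z E]; ring).
      rewrite (Phi_ext (proj1_sig (mop Mon x x)) (fun k => 1 * en 0 k + 1 * en 0 k)%Z)
        by (intro k; rewrite Mop_val; cbn [proj1_sig x E]; ring).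
      rewrite !Phi_lin, Phi_en, Phi_e0. unfold K. rewrite Nat2Z.inj_add. ring. }
  apply Hfne. rewrite H1, H2. exact HK.
Qed.
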